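(* For all $x>0$ and $y>0$, $$\Gamma(x,y)\ \ge\ \exp\big((x+y-2)\,\Gamma'(1)\big).$$
   Context: For $x>0,y>0$ the Bigamma function is the (convergent) improper integral $\Gamma(x,y):=\int_0^1(-\ln t)^{x-1}\big(-\ln(1-t)\big)^{y-1}\,dt$. $\Gamma'(1)$ is the derivative at $1$ of Euler's gamma function $\Gamma(x)=\int_0^\infty t^{x-1}e^{-t}dt$. *)

(* Defs.v *)
From Stdlib Require Import Reals.
From Coquelicot Require Import Coquelicot.
Open Scope R_scope.

Definition EulerGamma (x : R) : R :=
  RInt_gen (fun t => Rpower t (x - 1) * exp (- t))
           (at_right 0) (Rbar_locally p_infty).

Definition bigamma_integrand (x y : R) (t : R) : R :=
  Rpower (- ln t) (x - 1) * Rpower (- ln (1 - t)) (y - 1).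

Definition Bigamma (x y : R) : R :=
  RInt_gen (bigamma_integrand x y) (at_right 0) (at_left 1).

(* Main.v *)
Require Import Defs.
From Stdlib Require Import Reals Lra Lia Psatz.
From Coquelicot Require Import Coquelicot.
Open Scope R_scope.

Definition IG01 (f : R -> R) (l : R) := forall eps, 0 < eps -> exists d, 0 < d /\
  forall a b, 0 < a < d -> 1 - d < b < 1 -> exists y, is_RInt f a b y /\ Rabs (y - l) < eps.

Lemma ball_loc (c d : R) (Hd : 0 < d) (y : R) : ball c (mkposreal d Hd) y -> c - d < y < c + d.
Proof. intro Hy. change (Rabs (y - c) < d) in Hy. apply Rabs_def2 in Hy. lra. Qed.

Lemma IG01_gen f l : IG01 f l -> is_RInt_gen f (at_right 0) (at_left 1) l.
Proof.
  intros H P [eps HP].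
  destruct (H eps (cond_pos eps)) as [d [Hd H']].
  apply Filter_prod with (Q := fun a => 0 < a < d) (R := fun b => 1 - d < b < 1).
  - exists (mkposreal d Hd). intros y Hy Hy0. apply ball_loc in Hy. lra.
  - exists (mkposreal d Hd). intros y Hy Hy0. apply ball_loc in Hy. lra.
  - intros a b Ha Hb. destruct (H' a b Ha Hb) as [y [Hy1 Hy2]]. exists y; split; [exact Hy1| apply HP; exact Hy2].
Qed.

Definition IGinf (f : R -> R) (l : R) := forall eps, 0 < eps -> exists d M, 0 < d /\
  forall a b, 0 < a < d -> M < b -> exists y, is_RInt f a b y /\ Rabs (y - l) < eps.

Lemma IGinf_gen f l : IGinf f l -> is_RInt_gen f (at_right 0) (Rbar_locally p_infty) l.
Proof.
  intros H P [eps HP].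
  destruct (H eps (cond_pos eps)) as [d [M [Hd H']]].
  apply Filter_prod with (Q := fun a => 0 < a < d) (R := fun b => M < b).
  - exists (mkposreal d Hd). intros y Hy Hy0. apply ball_loc in Hy. lra.
  - exists M. auto.
  - intros a b Ha Hb. destruct (H' a b Ha Hb) as [y [Hy1 Hy2]]. exists y; split; [exact Hy1| apply HP; exact Hy2].
Qed.

Lemma EG_unique s l : IGinf (fun t => Rpower t (s - 1) * exp (- t)) l -> EulerGamma s = l.
Proof. intro H. unfold EulerGamma. apply is_RInt_gen_unique. now apply IGinf_gen. Qed.

Lemma B_unique x y l : IG01 (bigamma_integrand x y) l -> Bigamma x y = l.
Proof. intro H. unfold Bigamma. apply is_RInt_gen_unique. now apply IG01_gen. Qed.
Lemma IG01_ext f g l : (forall u, 0 < u < 1 -> f u = g u) -> IG01 f l -> IG01 g l.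
Proof.
  intros Hfg H eps Heps. destruct (H eps Heps) as [d [Hd H']].
  exists (Rmin d 1). split. { apply Rmin_pos; lra. }
  intros a b Ha Hb.
  assert (Hd1 := Rmin_l d 1). assert (Hd2 := Rmin_r d 1).
  destruct (H' a b) as [y [Hy1 Hy2]]; try lra.
  exists y; split; auto.
  apply is_RInt_ext with f; auto.
  intros x Hx. apply Hfg. split.
  - apply Rlt_le_trans with (Rmin a b); [apply Rmin_glb_lt; lra | lra].
  - apply Rlt_le_trans with (Rmax a b); [lra | apply Rmax_lub; lra].
Qed.

Lemma IG01_plus f g lf lg : IG01 f lf -> IG01 g lg -> IG01 (fun u => f u + g u) (lf + lg).
Proof.
  intros Hf Hg eps Heps.
  destruct (Hf (eps/2)) as [d1 [Hd1 H1]]; try lra.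
  destruct (Hg (eps/2)) as [d2 [Hd2 H2]]; try lra.
  exists (Rmin d1 d2). split. { apply Rmin_pos; lra. }
  intros a b Ha Hb.
  assert (Hm1 := Rmin_l d1 d2). assert (Hm2 := Rmin_r d1 d2).
  destruct (H1 a b) as [y1 [Hy1 Hz1]]; try lra.
  destruct (H2 a b) as [y2 [Hy2 Hz2]]; try lra.
  exists (y1 + y2). split.
  - apply (is_RInt_plus f g a b y1 y2 Hy1 Hy2).
  - replace (y1 + y2 - (lf + lg)) with ((y1 - lf) + (y2 - lg)) by ring.
    eapply Rle_lt_trans; [apply Rabs_triang|]. lra.
Qed.

Lemma IG01_scal k f l : IG01 f l -> IG01 (fun u => k * f u) (k * l).
Proof.
  intros Hf eps Heps.
  destruct (Hf (eps / (Rabs k + 1))) as [d [Hd H1]].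
  { apply Rdiv_lt_0_compat; [lra| pose proof (Rabs_pos k); lra]. }
  exists d. split; auto. intros a b Ha Hb.
  destruct (H1 a b Ha Hb) as [y [Hy Hz]].
  exists (k * y). split.
  - apply (is_RInt_scal f a b k y Hy).
  - replace (k * y - k * l) with (k * (y - l)) by ring. rewrite Rabs_mult.
    assert (Hk := Rabs_pos k).
    apply Rle_lt_trans with ((Rabs k + 1) * Rabs (y - l)).
    + apply Rmult_le_compat_r; [apply Rabs_pos| lra].
    + replace eps with ((Rabs k + 1) * (eps / (Rabs k + 1))) by (field; lra).
      apply Rmult_lt_compat_l; lra.
Qed.

Lemma IG01_antider F f la lb :
  (forall u, 0 < u < 1 -> is_derive F u (f u)) ->
  (forall u, 0 < u < 1 -> continuous f u) ->
  (forall eps, 0 < eps -> exists d, 0 < d /\ forall u, 0 < u < d -> Rabs (F u - la) < eps) ->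
  (forall eps, 0 < eps -> exists d, 0 < d /\ forall u, 1 - d < u < 1 -> Rabs (F u - lb) < eps) ->
  IG01 f (lb - la).
Proof.
  intros HF Hc H0 H1 eps Heps.
  destruct (H0 (eps/2)) as [d0 [Hd0 H0']]; try lra.
  destruct (H1 (eps/2)) as [d1 [Hd1 H1']]; try lra.
  exists (Rmin (Rmin d0 d1) 1). split. { repeat apply Rmin_pos; lra. }
  intros a b Ha Hb.
  assert (Hm1 := Rmin_l (Rmin d0 d1) 1). assert (Hm2 := Rmin_r (Rmin d0 d1) 1).
  assert (Hm3 := Rmin_l d0 d1). assert (Hm4 := Rmin_r d0 d1).
  assert (Hin : forall x, Rmin a b <= x <= Rmax a b -> 0 < x < 1).
  { intros x Hx. split.
    - apply Rlt_le_trans with (Rmin a b); [apply Rmin_glb_lt; lra | lra].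
    - apply Rle_lt_trans with (Rmax a b); [lra | apply Rmax_lub_lt; lra]. }
  exists (F b - F a). split.
  - apply (is_RInt_derive F f a b).
    + intros x Hx. apply HF. auto.
    + intros x Hx. apply Hc. auto.
  - assert (A := H0' a ltac:(lra)). assert (B := H1' b ltac:(lra)).
    replace (F b - F a - (lb - la)) with ((F b - lb) - (F a - la)) by ring.
    eapply Rle_lt_trans; [apply Rabs_triang|]. rewrite Rabs_Ropp. lra.
Qed.

Lemma IG01_le f g lf lg : IG01 f lf -> IG01 g lg -> (forall u, 0 < u < 1 -> f u <= g u) -> lf <= lg.
Proof.
  intros Hf Hg Hle.
  destruct (Rle_or_lt lf lg) as [H|H]; auto. exfalso.
  set (e := (lf - lg) / 2).
  destruct (Hf e) as [d1 [Hd1 H1]]; [unfold e; lra|].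
  destruct (Hg e) as [d2 [Hd2 H2]]; [unfold e; lra|].
  set (a := Rmin (Rmin d1 d2) (1/2) / 2).
  assert (Hm1 := Rmin_l (Rmin d1 d2) (1/2)). assert (Hm2 := Rmin_r (Rmin d1 d2) (1/2)).
  assert (Hm3 := Rmin_l d1 d2). assert (Hm4 := Rmin_r d1 d2).
  assert (Ha : 0 < a). { unfold a. assert (0 < Rmin (Rmin d1 d2) (1/2)) by (repeat apply Rmin_pos; lra). lra. }
  assert (Ha2 : a <= Rmin (Rmin d1 d2) (1/2) / 2) by (unfold a; lra).
  destruct (H1 a (1 - a)) as [y1 [Hy1 Hz1]]; try lra.
  destruct (H2 a (1 - a)) as [y2 [Hy2 Hz2]]; try lra.
  assert (y1 <= y2).
  { apply (is_RInt_le f g a (1 - a) y1 y2); auto; try lra. intros x Hx. apply Hle. lra. }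
  apply Rabs_def2 in Hz1. apply Rabs_def2 in Hz2. unfold e in *. lra.
Qed.

Lemma IG01_refl f l : IG01 f l -> IG01 (fun u => f (1 - u)) l.
Proof.
  intros Hf eps Heps. destruct (Hf eps Heps) as [d [Hd H]].
  exists d. split; auto. intros a b Ha Hb.
  destruct (H (1 - b) (1 - a)) as [y [Hy Hz]]; try lra.
  exists y. split; auto.
  apply is_RInt_swap in Hy.
  assert (Hc := is_RInt_comp_lin f (-1) 1 a b (opp y)).
  replace (-1 * a + 1) with (1 - a) in Hc by ring.
  replace (-1 * b + 1) with (1 - b) in Hc by ring.
  specialize (Hc Hy). apply is_RInt_opp in Hc.
  replace y with (opp (opp y)) by (apply opp_opp).
  apply is_RInt_ext with (2 := Hc). intros x _.
  change (- (-1 * f (-1 * x + 1)) = f (1 - x)).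
  replace (-1 * x + 1) with (1 - x) by ring. ring.
Qed.
Lemma btw01 a b x : 0 < a < 1 -> 0 < b < 1 -> Rmin a b <= x <= Rmax a b -> 0 < x < 1.
Proof.
  intros Ha Hb Hx. split.
  - apply Rlt_le_trans with (Rmin a b); [apply Rmin_glb_lt; lra | lra].
  - apply Rle_lt_trans with (Rmax a b); [lra | apply Rmax_lub_lt; lra].
Qed.

Lemma ex01 (f : R -> R) a b : (forall u, 0 < u < 1 -> continuous f u) -> 0 < a < 1 -> 0 < b < 1 -> ex_RInt f a b.
Proof. intros Hc Ha Hb. apply (@ex_RInt_continuous R_CompleteNormedModule). intros z Hz. apply Hc. apply (btw01 a b z); auto. Qed.

Lemma chasles01 (f : R -> R) a b c : (forall u, 0 < u < 1 -> continuous f u) ->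
  0 < a < 1 -> 0 < b < 1 -> 0 < c < 1 -> RInt f a b + RInt f b c = RInt f a c.
Proof. intros Hc Ha Hb Hcc. apply (RInt_Chasles f a b c); apply ex01; auto. Qed.

Lemma RInt_abs_le01 (f g : R -> R) a b : (forall u, 0 < u < 1 -> continuous f u) ->
  (forall u, 0 < u < 1 -> continuous g u) -> (forall u, 0 < u < 1 -> Rabs (f u) <= g u) ->
  0 < a < 1 -> 0 < b < 1 -> Rabs (RInt f a b) <= Rabs (RInt g a b).
Proof.
  intros Hf Hg Hb0.
  assert (K : forall a b, 0 < a < 1 -> 0 < b < 1 -> a <= b -> Rabs (RInt f a b) <= Rabs (RInt g a b)).
  { intros a0 b0 Ha Hb Hab.
    eapply Rle_trans; [| apply Rle_abs].
    apply (norm_RInt_le f g a0 b0 (RInt f a0 b0) (RInt g a0 b0) Hab).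
    - intros x Hx. apply Hb0. lra.
    - apply (@RInt_correct R_CompleteNormedModule). apply ex01; auto.
    - apply (@RInt_correct R_CompleteNormedModule). apply ex01; auto. }
  intros Ha Hb. destruct (Rle_or_lt a b) as [H|H]; auto.
  rewrite <- (opp_RInt_swap f b a) by (apply ex01; auto).
  rewrite <- (opp_RInt_swap g b a) by (apply ex01; auto).
  change (Rabs (- RInt f b a) <= Rabs (- RInt g b a)). rewrite !Rabs_Ropp.
  apply K; auto; lra.
Qed.

Lemma IG01_dom (f g : R -> R) lg : (forall u, 0 < u < 1 -> continuous f u) ->
  (forall u, 0 < u < 1 -> continuous g u) -> (forall u, 0 < u < 1 -> Rabs (f u) <= g u) ->
  IG01 g lg -> exists l, IG01 f l.
Proof.
  intros Hf Hg Hb Hig.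
  assert (Cau : forall eps, 0 < eps -> exists d, 0 < d /\ d <= 1/2 /\ forall a a' b b',
      0 < a < d -> 0 < a' < d -> 1 - d < b < 1 -> 1 - d < b' < 1 ->
      Rabs (RInt f a b - RInt f a' b') < eps).
  { intros eps Heps. destruct (Hig (eps/4)) as [d [Hd H]]; try lra.
    exists (Rmin d (1/2)). assert (Hm1 := Rmin_l d (1/2)). assert (Hm2 := Rmin_r d (1/2)).
    split; [apply Rmin_pos; lra|]. split; auto.
    intros a a' b b' Ha Ha' Hb' Hb''.
    assert (G : forall x y, 0 < x < Rmin d (1/2) -> 1 - Rmin d (1/2) < y < 1 -> Rabs (RInt g x y - lg) < eps / 4).
    { intros x y Hx Hy. destruct (H x y) as [z [Hz1 Hz2]]; try lra.
      rewrite (is_RInt_unique g x y z Hz1). exact Hz2. }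
    assert (E1 := chasles01 f a a' b Hf ltac:(lra) ltac:(lra) ltac:(lra)).
    assert (E2 := chasles01 f a' b' b Hf ltac:(lra) ltac:(lra) ltac:(lra)).
    assert (E3 := chasles01 g a a' b Hg ltac:(lra) ltac:(lra) ltac:(lra)).
    assert (E4 := chasles01 g a' b' b Hg ltac:(lra) ltac:(lra) ltac:(lra)).
    assert (B1 := RInt_abs_le01 f g a a' Hf Hg Hb ltac:(lra) ltac:(lra)).
    assert (B2 := RInt_abs_le01 f g b' b Hf Hg Hb ltac:(lra) ltac:(lra)).
    assert (G1 := G a b ltac:(lra) ltac:(lra)).
    assert (G2 := G a' b ltac:(lra) ltac:(lra)).
    assert (G3 := G a' b' ltac:(lra) ltac:(lra)).
    replace (RInt f a b - RInt f a' b') with (RInt f a a' + RInt f b' b) by lra.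
    eapply Rle_lt_trans; [apply Rabs_triang|].
    apply Rabs_def2 in G1. apply Rabs_def2 in G2. apply Rabs_def2 in G3.
    assert (Rabs (RInt g a a') < eps / 2).
    { replace (RInt g a a') with (RInt g a b - RInt g a' b) by lra. apply Rabs_def1; lra. }
    assert (Rabs (RInt g b' b) < eps / 2).
    { replace (RInt g b' b) with (RInt g a' b - RInt g a' b') by lra. apply Rabs_def1; lra. }
    lra. }
  assert (Arch : forall d, 0 < d -> exists N, forall n, (n >= N)%nat -> / (INR n + 3) < d).
  { intros d Hd. destruct (archimed_cor1 d Hd) as [N [HN1 HN2]]. exists N. intros n Hn.
    apply Rle_lt_trans with (/ INR N); auto.
    assert (0 < INR N) by (apply lt_0_INR; lia).
    assert (INR N <= INR n) by (apply le_INR; lia).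
    apply Rinv_le_contravar; lra. }
  assert (Pos : forall n, 0 < / (INR n + 3) < 1/2).
  { intro n. assert (0 <= INR n) by apply pos_INR. split.
    - apply Rinv_0_lt_compat; lra.
    - apply Rle_lt_trans with (/3); [apply Rinv_le_contravar; lra|lra]. }
  set (s := fun n : nat => (RInt (V := R_CompleteNormedModule) f (/ (INR n + 3)) (1 - / (INR n + 3)) : R)).
  assert (Cs : Cauchy_crit s).
  { intros eps Heps. destruct (Cau eps Heps) as [d [Hd [Hd2 H]]].
    destruct (Arch d Hd) as [N HN]. exists N. intros n m Hn Hm. unfold Rdist, s.
    assert (P1 := Pos n). assert (P2 := Pos m). assert (Q1 := HN n Hn). assert (Q2 := HN m Hm).
    apply H; lra. }
  destruct (Stdlib.Reals.Rcomplete.R_complete s Cs) as [l Hl]. exists l.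
  intros eps Heps. destruct (Cau (eps/2)) as [d [Hd [Hd2 H]]]; try lra.
  exists d. split; auto. intros a b Ha Hb'.
  destruct (Arch d Hd) as [N1 HN1]. destruct (Hl (eps/2)) as [N2 HN2]; try lra.
  set (n := Nat.max N1 N2).
  assert (Q1 := HN1 n ltac:(unfold n; lia)). assert (Q2 := HN2 n ltac:(unfold n; lia)).
  assert (P1 := Pos n). unfold Rdist in Q2.
  exists (RInt f a b). split.
  - apply (@RInt_correct R_CompleteNormedModule). apply ex01; auto; lra.
  - assert (Rabs (RInt f a b - s n) < eps / 2) by (unfold s; apply H; lra).
    replace (RInt f a b - l) with ((RInt f a b - s n) + (s n - l)) by ring.
    eapply Rle_lt_trans; [apply Rabs_triang|]. lra.
Qed.
Lemma exp_le_mono x y : x <= y -> exp x <= exp y.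
Proof. intro H. destruct (Rle_lt_or_eq_dec _ _ H) as [H'|H']. apply Rlt_le, exp_increasing; auto. rewrite H'; lra. Qed.

Lemma cont_eps (F : R -> R) c : continuous F c ->
  forall eps, 0 < eps -> exists d, 0 < d /\ forall u, Rabs (u - c) < d -> Rabs (F u - F c) < eps.
Proof.
  intros H eps Heps. apply filterlim_locally with (eps := mkposreal eps Heps) in H.
  destruct H as [d Hd]. exists d. split; [apply cond_pos|].
  intros u Hu. apply (Hd u Hu).
Qed.

Lemma ln_lt_self w : 0 < w -> ln w < w.
Proof. intro H. assert (A := exp_ineq1_le (ln w)). rewrite exp_ln in A by lra. lra. Qed.

Lemma ln_pos_lt u : 0 < u < 1 -> 0 < - ln u.
Proof. intro H. assert (ln u < 0). { rewrite <- ln_1. apply ln_increasing; lra. } lra. Qed.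

Lemma mlog_bounds u : 0 < u < 1 -> 1 - u <= - ln u <= (1 - u) / u.
Proof.
  intro H. split.
  - assert (A := exp_ineq1_le (ln u)). rewrite exp_ln in A by lra. lra.
  - assert (A := exp_ineq1_le (ln (/ u))). rewrite exp_ln in A.
    + rewrite ln_Rinv in A by lra. unfold Rdiv. rewrite Rmult_minus_distr_r.
      rewrite Rinv_r by lra. lra.
    + apply Rinv_0_lt_compat; lra.
Qed.

Lemma exp_sq t : 0 <= t -> t ^ 2 / 4 <= exp t.
Proof.
  intro H. replace (exp t) with (exp (t/2) * exp (t/2)) by (rewrite <- exp_plus; f_equal; field).
  assert (A := exp_ineq1_le (t/2)). nra.
Qed.

Lemma exp_taylor a : Rabs (exp a - 1 - a) <= a ^ 2 * exp (Rabs a).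
Proof.
  destruct (Rle_or_lt 0 a) as [H|H].
  - rewrite (Rabs_right a) by lra.
    assert (A := exp_ineq1_le a). assert (B := exp_ineq1_le (- a)).
    assert (C : exp a * exp (- a) = 1) by (rewrite <- exp_plus; replace (a + - a) with 0 by ring; apply exp_0).
    assert (P := exp_pos a). assert (P' := exp_pos (- a)).
    assert (D : exp a - 1 <= a * exp a) by nra.
    rewrite Rabs_right by lra. nra.
  - rewrite (Rabs_left a) by lra.
    assert (A := exp_ineq1_le a). assert (B := exp_ineq1_le (- a)).
    assert (C : exp a * exp (- a) = 1) by (rewrite <- exp_plus; replace (a + - a) with 0 by ring; apply exp_0).
    assert (P := exp_pos a). assert (P' := exp_pos (- a)).
    assert (D : 1 >= exp a * (1 - a)) by nra.
    rewrite Rabs_right by lra.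
    assert (exp a - 1 - a <= a ^ 2) by nra. nra.
Qed.

Lemma lam_sq l : l ^ 2 <= 32 * exp (3 * Rabs l / 8).
Proof.
  assert (A := exp_sq (3 * Rabs l / 8) ltac:(pose proof (Rabs_pos l); lra)).
  assert (l ^ 2 = Rabs l ^ 2) by (unfold Rabs; destruct (Rcase_abs l); ring).
  nra.
Qed.

Lemma lam_abs l : Rabs l <= 2 * exp (Rabs l / 2).
Proof. assert (A := exp_ineq1_le (Rabs l / 2)). lra. Qed.

Lemma exp_abs_le c : exp (Rabs c) <= exp c + exp (- c).
Proof.
  assert (exp c > 0) by apply exp_pos. assert (exp (-c) > 0) by apply exp_pos.
  destruct (Rle_or_lt 0 c); [rewrite Rabs_right by lra | rewrite Rabs_left by lra]; lra.
Qed.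

Lemma rpow_taylor z h : 0 < z -> Rabs h <= 1/8 ->
  Rabs (Rpower z h - 1 - h * ln z) <= 32 * h ^ 2 * (Rpower z (1/2) + Rpower z (-(1/2))).
Proof.
  intros Hz Hh. unfold Rpower. set (l := ln z).
  eapply Rle_trans; [apply exp_taylor|].
  assert (E1 : exp (Rabs (h * l)) <= exp (Rabs l / 8)).
  { apply exp_le_mono. rewrite Rabs_mult.
    assert (Rabs l >= 0) by (apply Rle_ge, Rabs_pos). nra. }
  assert (E2 := lam_sq l).
  assert (E3 : exp (3 * Rabs l / 8) * exp (Rabs l / 8) = exp (Rabs (l / 2))).
  { rewrite <- exp_plus. f_equal. unfold Rdiv. rewrite Rabs_mult, (Rabs_right (/2)) by lra. field. }
  assert (E4 := exp_abs_le (l / 2)).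
  replace (1 / 2 * l) with (l / 2) by field. replace (- (1 / 2) * l) with (- (l / 2)) by field.
  assert (Q : (h * l) ^ 2 = h ^ 2 * l ^ 2) by ring. rewrite Q.
  assert (0 <= h ^ 2) by apply pow2_ge_0.
  assert (0 < exp (Rabs (h * l))) by apply exp_pos.
  assert (0 < exp (Rabs l / 8)) by apply exp_pos.
  assert (0 < exp (3 * Rabs l / 8)) by apply exp_pos.
  apply Rle_trans with (h ^ 2 * (32 * exp (3 * Rabs l / 8)) * exp (Rabs l / 8)).
  - assert (h ^ 2 * l ^ 2 <= h ^ 2 * (32 * exp (3 * Rabs l / 8))) by (apply Rmult_le_compat_l; auto).
    apply Rmult_le_compat; auto; try lra. apply Rmult_le_pos; auto. apply pow2_ge_0.
  - replace (h ^ 2 * (32 * exp (3 * Rabs l / 8)) * exp (Rabs l / 8)) with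
      (32 * h ^ 2 * (exp (3 * Rabs l / 8) * exp (Rabs l / 8))) by ring.
    rewrite E3. apply Rmult_le_compat_l; [nra|]. exact E4.
Qed.
Lemma dcont (f : R -> R) x : ex_derive f x -> continuous f x.
Proof. apply (@ex_derive_continuous R_AbsRing R_NormedModule). Qed.

Lemma rpow_cont p u : 0 < u -> continuous (fun z => Rpower z p) u.
Proof. intro H. apply dcont. unfold Rpower. auto_derive. auto. Qed.

Lemma IG01_pow d : 0 < d -> IG01 (fun u => Rpower u (d - 1)) (1 / d).
Proof.
  intro Hd. replace (1 / d) with (1 / d - 0) by ring.
  apply IG01_antider with (F := fun u => Rpower u d / d).
  - intros u Hu. unfold Rpower. auto_derive; [lra|].
    replace ((d - 1) * ln u) with (d * ln u + - ln u) by ring.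
    rewrite exp_plus, exp_Ropp, exp_ln by lra. field. lra.
  - intros u Hu. apply rpow_cont. lra.
  - intros eps Heps. exists (exp (ln (eps * d) / d)). split; [apply exp_pos|].
    intros u Hu. unfold Rpower. rewrite Rminus_0_r.
    assert (0 < exp (d * ln u)) by apply exp_pos.
    rewrite Rabs_right by (apply Rle_ge, Rlt_le, Rdiv_lt_0_compat; lra).
    assert (Hl : ln u < ln (eps * d) / d).
    { rewrite <- (ln_exp (ln (eps * d) / d)). apply ln_increasing; lra. }
    assert (d * ln u < ln (eps * d)).
    { apply Rmult_lt_compat_l with (r := d) in Hl; auto.
      replace (d * (ln (eps * d) / d)) with (ln (eps * d)) in Hl by (field; lra). lra. }
    apply exp_increasing in H0. rewrite exp_ln in H0 by nra.
    apply Rmult_lt_reg_r with d; auto. unfold Rdiv. rewrite Rmult_assoc, Rinv_l by lra. lra.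
  - intros eps Heps.
    assert (C : continuous (fun u => Rpower u d / d) 1).
    { apply dcont. unfold Rpower. auto_derive. lra. }
    destruct (cont_eps _ _ C eps Heps) as [e [He H]].
    exists e. split; auto. intros u Hu.
    replace (1 / d) with (Rpower 1 d / d) by (unfold Rpower; rewrite ln_1, Rmult_0_r, exp_0; auto).
    apply H. rewrite Rabs_left; lra.
Qed.

Lemma IG01_pow' d : 0 < d -> IG01 (fun u => Rpower (1 - u) (d - 1)) (1 / d).
Proof. intro Hd. apply (IG01_refl (fun u => Rpower u (d - 1))). now apply IG01_pow. Qed.
Lemma ln2_pos : 0 < ln 2.
Proof. rewrite <- ln_1. apply ln_increasing; lra. Qed.

Lemma half_bound x y : 0 < x -> 0 < y -> exists K, forall u, 0 < u <= 1/2 ->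
  bigamma_integrand x y u <= exp K * Rpower u (y / 2 - 1).
Proof.
  intros Hx Hy.
  assert (L2 := ln2_pos).
  assert (Fact : forall u, 0 < u <= 1/2 ->
    - ln 2 <= ln (- ln u) /\ ln u <= ln (- ln (1 - u)) <= ln 2 + ln u /\ ln u <= 0).
  { intros u Hu.
    assert (B1 := mlog_bounds u ltac:(lra)). assert (B2 := mlog_bounds (1 - u) ltac:(lra)).
    replace (1 - (1 - u)) with u in B2 by ring.
    split; [|split; [split|]].
    - rewrite <- (ln_exp (- ln 2)). apply ln_le. apply exp_pos.
      rewrite exp_Ropp, exp_ln by lra. lra.
    - apply ln_le; lra.
    - rewrite <- ln_mult by lra. apply ln_le. apply ln_pos_lt; lra.
      apply Rle_trans with (u / (1 - u)); [lra|]. unfold Rdiv.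
      apply Rle_trans with (u * 2); [|lra]. apply Rmult_le_compat_l; [lra|].
      replace 2 with (/ (1/2)) by field. apply Rinv_le_contravar; lra.
    - rewrite <- ln_1. apply ln_le; lra. }
  assert (Red : forall u K, 0 < u <= 1/2 ->
     (x - 1) * ln (- ln u) + (y - 1) * ln (- ln (1 - u)) <= K + (y / 2 - 1) * ln u ->
     bigamma_integrand x y u <= exp K * Rpower u (y / 2 - 1)).
  { intros u K Hu H. unfold bigamma_integrand, Rpower. rewrite <- !exp_plus.
    apply exp_le_mono. exact H. }
  destruct (Rle_or_lt x 1) as [Hx1|Hx1].
  - exists ((1 - x) * ln 2 + Rabs (y - 1) * ln 2). intros u Hu. apply Red; auto.
    destruct (Fact u Hu) as [F1 [[F2 F3] F4]].
    assert (P1 : 0 <= (1 - x) * (ln (- ln u) + ln 2)) by (apply Rmult_le_pos; lra).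
    assert (P3 : 0 <= y / 2 * (- ln u)) by (apply Rmult_le_pos; lra).
    destruct (Rle_or_lt 1 y).
    + rewrite Rabs_right by lra.
      assert (P2 : 0 <= (y - 1) * (ln 2 + ln u - ln (- ln (1 - u)))) by (apply Rmult_le_pos; lra).
      nra.
    + rewrite Rabs_left by lra.
      assert (P2 : 0 <= (1 - y) * (ln (- ln (1 - u)) - ln u)) by (apply Rmult_le_pos; lra).
      nra.
  - set (e := y / (2 * (x - 1))).
    assert (He : 0 < e) by (unfold e; apply Rdiv_lt_0_compat; lra).
    exists (- (x - 1) * ln e + Rabs (y - 1) * ln 2). intros u Hu. apply Red; auto.
    destruct (Fact u Hu) as [F1 [[F2 F3] F4]].
    assert (Hz : 0 < - ln u) by (apply ln_pos_lt; lra).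
    assert (G : ln (- ln u) < - e * ln u - ln e).
    { assert (A := ln_lt_self (e * - ln u) ltac:(nra)). rewrite ln_mult in A by lra. lra. }
    assert (P1 : 0 <= (x - 1) * (- e * ln u - ln e - ln (- ln u))) by (apply Rmult_le_pos; lra).
    assert (Ee : (x - 1) * e = y / 2) by (unfold e; field; lra).
    destruct (Rle_or_lt 1 y).
    + rewrite Rabs_right by lra.
      assert (P2 : 0 <= (y - 1) * (ln 2 + ln u - ln (- ln (1 - u)))) by (apply Rmult_le_pos; lra).
      nra.
    + rewrite Rabs_left by lra.
      assert (P2 : 0 <= (1 - y) * (ln (- ln (1 - u)) - ln u)) by (apply Rmult_le_pos; lra).
      nra.
Qed.
Lemma B_cont x y u : 0 < u < 1 -> continuous (bigamma_integrand x y) u.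
Proof.
  intro Hu. apply dcont. unfold bigamma_integrand, Rpower.
  assert (0 < - ln u) by (apply ln_pos_lt; lra).
  assert (0 < - ln (1 + - u)) by (apply ln_pos_lt; lra).
  auto_derive. repeat split; lra.
Qed.

Lemma B_pos x y u : 0 < bigamma_integrand x y u.
Proof. unfold bigamma_integrand, Rpower. apply Rmult_lt_0_compat; apply exp_pos. Qed.

Lemma B_exists x y : 0 < x -> 0 < y -> exists l, IG01 (bigamma_integrand x y) l.
Proof.
  intros Hx Hy.
  destruct (half_bound x y Hx Hy) as [K1 H1].
  destruct (half_bound y x Hy Hx) as [K2 H2].
  set (d := Rmin x y / 2).
  assert (Hd : 0 < d) by (unfold d; assert (0 < Rmin x y) by (apply Rmin_pos; lra); lra).
  assert (Hdx : d <= x / 2) by (unfold d; assert (Rmin x y <= x) by apply Rmin_l; lra).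
  assert (Hdy : d <= y / 2) by (unfold d; assert (Rmin x y <= y) by apply Rmin_r; lra).
  set (W := fun u => exp K1 * Rpower u (d - 1) + exp K2 * Rpower (1 - u) (d - 1)).
  assert (HW : IG01 W (exp K1 * (1 / d) + exp K2 * (1 / d))).
  { apply IG01_plus; apply IG01_scal; [apply IG01_pow | apply IG01_pow']; auto. }
  assert (Mono : forall v p q, 0 < v < 1 -> p <= q -> Rpower v q <= Rpower v p).
  { intros v p q Hv Hpq. unfold Rpower. apply exp_le_mono.
    assert (ln v < 0) by (rewrite <- ln_1; apply ln_increasing; lra). nra. }
  apply IG01_dom with (g := W) (lg := exp K1 * (1 / d) + exp K2 * (1 / d)); auto.
  - intros u Hu. apply B_cont; auto.
  - intros u Hu. unfold W. apply dcont. unfold Rpower. auto_derive. lra.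
  - intros u Hu. rewrite Rabs_right by (apply Rle_ge, Rlt_le, B_pos).
    assert (P1 : 0 < exp K1 * Rpower u (d - 1)) by (apply Rmult_lt_0_compat; apply exp_pos).
    assert (P2 : 0 < exp K2 * Rpower (1 - u) (d - 1)) by (apply Rmult_lt_0_compat; apply exp_pos).
    unfold W. destruct (Rle_or_lt u (1/2)).
    + assert (A := H1 u ltac:(lra)).
      assert (Rpower u (y / 2 - 1) <= Rpower u (d - 1)) by (apply Mono; lra).
      assert (exp K1 * Rpower u (y / 2 - 1) <= exp K1 * Rpower u (d - 1))
        by (apply Rmult_le_compat_l; [apply Rlt_le, exp_pos | auto]).
      lra.
    + assert (A := H2 (1 - u) ltac:(lra)).
      replace (bigamma_integrand y x (1 - u)) with (bigamma_integrand x y u) in A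
        by (unfold bigamma_integrand; replace (1 - (1 - u)) with u by ring; ring).
      assert (Rpower (1 - u) (x / 2 - 1) <= Rpower (1 - u) (d - 1)) by (apply Mono; lra).
      assert (exp K2 * Rpower (1 - u) (x / 2 - 1) <= exp K2 * Rpower (1 - u) (d - 1))
        by (apply Rmult_le_compat_l; [apply Rlt_le, exp_pos | auto]).
      lra.
Qed.
Definition gk (s : R) (u : R) := Rpower (- ln u) (s - 1).

Lemma gk_cont s u : 0 < u < 1 -> continuous (gk s) u.
Proof.
  intro Hu. apply dcont. unfold gk, Rpower.
  assert (0 < - ln u) by (apply ln_pos_lt; lra). auto_derive. repeat split; lra.
Qed.

Lemma EG_B s : 0 < s -> exists l, IG01 (gk s) l /\ EulerGamma s = l.
Proof.
  intro Hs. destruct (B_exists s 1 Hs ltac:(lra)) as [l Hl].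
  assert (Hg : IG01 (gk s) l).
  { apply IG01_ext with (2 := Hl). intros u Hu. unfold bigamma_integrand, gk.
    unfold Rpower at 2. replace (1 - 1) with 0 by ring. rewrite Rmult_0_l, exp_0. ring. }
  exists l. split; auto. apply EG_unique.
  intros eps Heps. destruct (Hg eps Heps) as [d [Hd H]].
  set (d1 := Rmin d (1/2)).
  assert (Hd1 : 0 < d1) by (unfold d1; apply Rmin_pos; lra).
  assert (Hd1' : d1 <= 1/2) by (unfold d1; apply Rmin_r).
  assert (Hd1'' : d1 <= d) by (unfold d1; apply Rmin_l).
  exists (- ln (1 - d1)), (- ln d1). split.
  { apply ln_pos_lt; lra. }
  intros a b Ha Hb.
  assert (HM : 0 < - ln d1) by (apply ln_pos_lt; lra).
  assert (EA : 0 < exp (- b) < d).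
  { split; [apply exp_pos|]. apply Rlt_le_trans with d1; auto.
    rewrite <- (exp_ln d1) by lra. apply exp_increasing. lra. }
  assert (EB : 1 - d < exp (- a) < 1).
  { split.
    - apply Rle_lt_trans with (1 - d1); [lra|].
      rewrite <- (exp_ln (1 - d1)) by lra. apply exp_increasing. lra.
    - rewrite <- exp_0. apply exp_increasing. lra. }
  destruct (H (exp (- b)) (exp (- a)) EA EB) as [y [Hy Hz]].
  exists y. split; auto.
  assert (Hpos : forall t, Rmin a b <= t <= Rmax a b -> 0 < t).
  { intros t [Ht1 Ht2]. apply Rlt_le_trans with (Rmin a b); [apply Rmin_glb_lt; lra | lra]. }
  assert (C := is_RInt_comp (gk s) (fun t => exp (- t)) (fun t => - exp (- t)) a b).
  assert (C' : is_RInt (fun t => - exp (- t) * gk s (exp (- t))) a b (RInt (gk s) (exp (- a)) (exp (- b)))).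
  { apply C.
    - intros t Ht. apply gk_cont. split; [apply exp_pos|].
      rewrite <- exp_0. apply exp_increasing. assert (0 < t) by auto. lra.
    - intros t Ht. split.
      + auto_derive; auto. ring.
      + apply dcont. auto_derive. auto. }
  apply is_RInt_swap in Hy.
  rewrite (is_RInt_unique (gk s) (exp (- a)) (exp (- b)) _ Hy) in C'.
  apply is_RInt_opp in C'.
  replace y with (opp (opp (opp (opp y)))) by (rewrite !opp_opp; auto).
  rewrite (opp_opp (opp y)).
  apply is_RInt_ext with (2 := C').
  intros t _. unfold gk. rewrite ln_exp, Ropp_involutive.
  change (- (- exp (- t) * Rpower t (s - 1)) = Rpower t (s - 1) * exp (- t)). ring.
Qed.
Lemma IG01_unique f l1 l2 : IG01 f l1 -> IG01 f l2 -> l1 = l2.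
Proof.
  intros H1 H2. apply Rle_antisym; eapply IG01_le; eauto; intros; lra.
Qed.

Lemma IG01_one : IG01 (fun _ => 1) 1.
Proof.
  assert (H := IG01_pow 1 ltac:(lra)). replace (1 / 1) with 1 in H by field.
  apply IG01_ext with (2 := H).
  intros u Hu. unfold Rpower. replace (1 - 1) with 0 by ring. rewrite Rmult_0_l. apply exp_0.
Qed.

Definition ell (u : R) := ln (- ln u).
Definition Dm (u : R) := Rpower (- ln u) (1/2) + Rpower (- ln u) (- (1/2)).

Lemma Dm_int : exists lD, IG01 Dm lD.
Proof.
  destruct (EG_B (3/2) ltac:(lra)) as [l1 [H1 _]].
  destruct (EG_B (1/2) ltac:(lra)) as [l2 [H2 _]].
  exists (l1 + l2). apply IG01_ext with (2 := IG01_plus _ _ _ _ H1 H2).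
  intros u Hu. unfold gk, Dm. f_equal; f_equal; field.
Qed.

Lemma ell_int : exists L, IG01 ell L.
Proof.
  destruct Dm_int as [lD HD].
  apply IG01_dom with (g := fun u => 2 * Dm u) (lg := 2 * lD).
  - intros u Hu. apply dcont. unfold ell.
    assert (0 < - ln u) by (apply ln_pos_lt; lra). auto_derive. repeat split; lra.
  - intros u Hu. apply dcont. unfold Dm, Rpower.
    assert (0 < - ln u) by (apply ln_pos_lt; lra). auto_derive. repeat split; lra.
  - intros u Hu. unfold ell, Dm, Rpower. set (l := ln (- ln u)).
    assert (A := lam_abs l). assert (B := exp_abs_le (l / 2)).
    replace (Rabs (l / 2)) with (Rabs l / 2) in B
      by (unfold Rdiv; rewrite Rabs_mult, (Rabs_right (/2)) by lra; auto).
    replace (1 / 2 * l) with (l / 2) by field. replace (- (1 / 2) * l) with (- (l / 2)) by field.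
    lra.
  - apply IG01_scal. auto.
Qed.

Lemma EG_deriv : exists L, IG01 ell L /\ is_derive EulerGamma 1 L.
Proof.
  destruct ell_int as [L HL]. destruct Dm_int as [lD HD]. exists L. split; auto.
  apply is_derive_Reals.
  assert (E1 : EulerGamma 1 = 1).
  { destruct (EG_B 1 ltac:(lra)) as [l [Hl El]]. rewrite El.
    apply (IG01_unique (gk 1)); auto.
    apply IG01_ext with (2 := IG01_one). intros u Hu. unfold gk, Rpower.
    replace (1 - 1) with 0 by ring. rewrite Rmult_0_l. now rewrite exp_0. }
  intros eps Heps.
  assert (Hd : 0 < Rmin (1/8) (eps / (32 * Rabs lD + 1))).
  { apply Rmin_pos; [lra|]. apply Rdiv_lt_0_compat; auto. pose proof (Rabs_pos lD); lra. }
  exists (mkposreal _ Hd). intros h Hh0 Hh. simpl in Hh.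
  assert (Hm1 := Rmin_l (1/8) (eps / (32 * Rabs lD + 1))).
  assert (Hm2 := Rmin_r (1/8) (eps / (32 * Rabs lD + 1))).
  destruct (EG_B (1 + h)) as [V [HV EV]].
  { assert (Rabs h < 1/8) by lra. apply Rabs_def2 in H. lra. }
  rewrite E1, EV.
  assert (HV' : IG01 (fun u => Rpower (- ln u) h) V).
  { apply IG01_ext with (2 := HV). intros u Hu. unfold gk. f_equal. ring. }
  assert (Comb := IG01_plus _ _ _ _ (IG01_plus _ _ _ _ HV' (IG01_scal (-1) _ _ IG01_one))
                     (IG01_scal (- h) _ _ HL)).
  assert (Bnd := IG01_scal (32 * h ^ 2) _ _ HD).
  assert (Bnd' := IG01_scal (- (32 * h ^ 2)) _ _ HD).
  assert (Pt : forall u, 0 < u < 1 ->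
     Rabs (Rpower (- ln u) h + -1 * 1 + - h * ell u) <= 32 * h ^ 2 * Dm u).
  { intros u Hu. unfold ell, Dm.
    replace (Rpower (- ln u) h + -1 * 1 + - h * ln (- ln u)) with
      (Rpower (- ln u) h - 1 - h * ln (- ln u)) by ring.
    apply rpow_taylor. apply ln_pos_lt; auto. lra. }
  assert (U : V + -1 * 1 + - h * L <= 32 * h ^ 2 * lD).
  { eapply IG01_le; [exact Comb | exact Bnd |]. intros u Hu. simpl.
    specialize (Pt u Hu). apply Rabs_le_between in Pt. lra. }
  assert (Lo : - (32 * h ^ 2) * lD <= V + -1 * 1 + - h * L).
  { eapply IG01_le; [exact Bnd' | exact Comb |]. intros u Hu. simpl.
    specialize (Pt u Hu). apply Rabs_le_between in Pt. lra. }
  assert (Hha : 0 < Rabs h) by (apply Rabs_pos_lt; auto).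
  assert (Q : (V - 1) / h - L = (V + -1 * 1 + - h * L) / h) by (field; auto).
  replace (1 + h - 1) with h by ring. rewrite Q.
  unfold Rdiv. rewrite Rabs_mult, Rabs_inv.
  assert (R1 : Rabs (V + -1 * 1 + - h * L) <= 32 * h ^ 2 * Rabs lD).
  { assert (0 <= h ^ 2) by apply pow2_ge_0.
    destruct (Rle_or_lt 0 lD).
    - rewrite (Rabs_right lD) by lra. apply Rabs_le. lra.
    - rewrite (Rabs_left lD) by lra. apply Rabs_le. nra. }
  apply Rmult_le_compat_r with (r := / Rabs h) in R1; [|apply Rlt_le, Rinv_0_lt_compat; auto].
  eapply Rle_lt_trans; [exact R1|].
  replace (32 * h ^ 2 * Rabs lD * / Rabs h) with (32 * Rabs lD * Rabs h).
  2: { replace (h ^ 2) with (Rabs h * Rabs h) by (unfold Rabs; destruct (Rcase_abs h); ring). field. lra. }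
  assert (Hh2 : Rabs h < eps / (32 * Rabs lD + 1)) by lra.
  assert (0 <= Rabs lD) by apply Rabs_pos.
  apply Rmult_lt_compat_l with (r := 32 * Rabs lD + 1) in Hh2; [|lra].
  replace ((32 * Rabs lD + 1) * (eps / (32 * Rabs lD + 1))) with eps in Hh2 by (field; lra).
  nra.
Qed.
Theorem mainTheorem11 :
  forall x y : R, 0 < x -> 0 < y ->
    ex_derive EulerGamma 1 /\
    ex_RInt_gen (bigamma_integrand x y) (at_right 0) (at_left 1) /\
    exp ((x + y - 2) * Derive EulerGamma 1) <= Bigamma x y.
Proof.
  intros x y Hx Hy.
  destruct EG_deriv as [L [HL HD]].
  destruct (B_exists x y Hx Hy) as [lB HB].
  split; [exists L; exact HD|].
  split; [exists lB; apply IG01_gen; exact HB|].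
  rewrite (is_derive_unique _ _ _ HD), (B_unique x y lB HB).
  set (c := (x + y - 2) * L).
  assert (HG := IG01_plus _ _ _ _ (IG01_scal (x - 1) _ _ HL) (IG01_scal (y - 1) _ _ (IG01_refl _ _ HL))).
  assert (HT := IG01_plus _ _ _ _ (IG01_plus _ _ _ _ (IG01_scal (exp c) _ _ IG01_one)
                   (IG01_scal (exp c) _ _ HG)) (IG01_scal (- (exp c * c)) _ _ IG01_one)).
  replace (exp c) with (exp c * 1 + exp c * ((x - 1) * L + (y - 1) * L) + - (exp c * c) * 1)
    by (unfold c; ring).
  eapply IG01_le; [exact HT | exact HB |].
  intros u Hu. simpl.
  set (G := (x - 1) * ell u + (y - 1) * ell (1 - u)).
  assert (E : bigamma_integrand x y u = exp G).
  { unfold bigamma_integrand, Rpower, G, ell. rewrite exp_plus. auto. }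
  rewrite E.
  replace (exp G) with (exp c * exp (G - c)) by (rewrite <- exp_plus; f_equal; ring).
  assert (A := exp_ineq1_le (G - c)). assert (P := exp_pos c).
  nra.
Qed.
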